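(* Let $P, Q\subseteq\mathbb{R}^7$ be distinct associative $3$-planes. Then $\Theta(P)\cap\Theta(Q) = (P\cap Q)\lrcorner\varphi = \{v\lrcorner\varphi : v\in P\cap Q\}$.
   Context: Equip $\mathbb{R}^7$ with its standard inner product, orientation and basis. Let $\varphi = e_{123} - e_{167} - e_{527} - e_{563} - e_{415} - e_{426} - e_{437}$ ($e_{ijk} = e_i\wedge e_j\wedge e_k$), $\psi = \star\varphi = e_{4567} - e_{4523} - e_{4163} - e_{4127} - e_{2637} - e_{1537} - e_{1526}$, and define $\times$ by $\langle u \times v, w \rangle = \varphi(u,v,w)$. A $3$-dimensional subspace is associative if closed under $\times$. For $u,v$: $u\wedge v$ is the 2-form $(a,b)\mapsto \langle u,a\rangle\langle v,b\rangle - \langle u,b\rangle\langle v,a\rangle$; $u\lrcorner\varphi$ is the 2-form $(a,b)\mapsto \varphi(u,a,b)$; $\Psi_{uv}$ is the 2-form $(a,b)\mapsto\psi(u,v,a,b)$. For associative $P$, $\Theta(P) = \Lambda^2(P)\oplus\Psi(P)$ where $\Lambda^2(P) = \mathrm{Span}\{u\wedge v: u,v\in P\}$ and $\Psi(P) = \mathrm{Span}\{\Psi_{uv} : u,v\in P\}$. *)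

(* Defs.v *)
From HB Require Import structures.
From mathcomp Require Import all_boot all_order all_algebra.
From mathcomp Require Import reals.
Set Implicit Arguments. Unset Strict Implicit. Unset Printing Implicit Defensive.
Import Order.TTheory GRing.Theory Num.Theory.
Local Open Scope ring_scope.

Section G2.
Variable R : realType.

(* vectors of R^7 are row vectors; basis index n (1-based, as in the paper) *)
Definition ix (n : nat) : 'I_7 := inord n.-1.

Definition ebasis (k : 'I_7) : 'rV[R]_7 := delta_mx 0 k.

Definition dotp (u v : 'rV[R]_7) : R := (u *m v^T) 0 0.

Definition e3 (i j k : nat) (u v w : 'rV[R]_7) : R :=
  \det (\matrix_(r < 3, c < 3)
          (nth 0 [:: u; v; w] r) 0 (nth (ix 0) [:: ix i; ix j; ix k] c)).

Definition e4 (i j k l : nat) (u v w x : 'rV[R]_7) : R :=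
  \det (\matrix_(r < 4, c < 4)
          (nth 0 [:: u; v; w; x] r) 0
          (nth (ix 0) [:: ix i; ix j; ix k; ix l] c)).

Definition phi (u v w : 'rV[R]_7) : R :=
  e3 1 2 3 u v w - e3 1 6 7 u v w - e3 5 2 7 u v w - e3 5 6 3 u v w
  - e3 4 1 5 u v w - e3 4 2 6 u v w - e3 4 3 7 u v w.

Definition psi (u v w x : 'rV[R]_7) : R :=
  e4 4 5 6 7 u v w x - e4 4 5 2 3 u v w x - e4 4 1 6 3 u v w x
  - e4 4 1 2 7 u v w x - e4 2 6 3 7 u v w x - e4 1 5 3 7 u v w x
  - e4 1 5 2 6 u v w x.

(* cross product: <u x v, w> = phi(u,v,w), i.e. (u x v)_k = phi(u,v,e_k) *)
Definition cross (u v : 'rV[R]_7) : 'rV[R]_7 :=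
  \row_k phi u v (ebasis k).

Definition assoc_plane (P : {vspace 'rV[R]_7}) : Prop :=
  \dim P = 3%N /\ forall u v, u \in P -> v \in P -> cross u v \in P.

(* A 2-form omega on R^7 is encoded by its matrix omega(e_a, e_b). *)
Definition form2 (f : 'rV[R]_7 -> 'rV[R]_7 -> R) : 'M[R]_7 :=
  \matrix_(a, b) f (ebasis a) (ebasis b).

Definition wedge (u v : 'rV[R]_7) : 'M[R]_7 :=
  form2 (fun a b => dotp u a * dotp v b - dotp u b * dotp v a).

Definition contr (u : 'rV[R]_7) : 'M[R]_7 := form2 (phi u).

Definition Psi (u v : 'rV[R]_7) : 'M[R]_7 := form2 (psi u v).

Definition span2 (f : 'rV[R]_7 -> 'rV[R]_7 -> 'M[R]_7)
    (P : {vspace 'rV[R]_7}) (om : 'M[R]_7) : Prop :=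
  exists s : seq (R * 'rV[R]_7 * 'rV[R]_7),
    (forall t, t \in s -> t.1.2 \in P /\ t.2 \in P) /\
    om = \sum_(t <- s) t.1.1 *: f t.1.2 t.2.

Definition Lambda2 (P : {vspace 'rV[R]_7}) := span2 wedge P.
Definition PsiP (P : {vspace 'rV[R]_7}) := span2 Psi P.

Definition Theta (P : {vspace 'rV[R]_7}) (om : 'M[R]_7) : Prop :=
  exists om1 om2, Lambda2 P om1 /\ PsiP P om2 /\ om = om1 + om2.

End G2.

(* Main.v *)
Require Import Defs.
From HB Require Import structures.
From mathcomp Require Import all_boot all_order all_algebra.
From mathcomp Require Import reals.
From mathcomp Require Import ring lra.
From Stdlib Require Import Classical.
Import Order.TTheory GRing.Theory Num.Theory.
Local Open Scope ring_scope.
Section S.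
Variable R : realType.
Notation vec := 'rV[R]_7.

Definition d3 (a1 a2 a3 b1 b2 b3 c1 c2 c3 : R) :=
  a1 * (b2 * c3 - b3 * c2) - a2 * (b1 * c3 - b3 * c1) + a3 * (b1 * c2 - b2 * c1).

Lemma e3E i j k (u v w : vec) : e3 i j k u v w =
  d3 (u 0 (ix i)) (u 0 (ix j)) (u 0 (ix k)) (v 0 (ix i)) (v 0 (ix j)) (v 0 (ix k))
     (w 0 (ix i)) (w 0 (ix j)) (w 0 (ix k)).
Proof.
rewrite /e3 (expand_det_row _ ord0) !big_ord_recl big_ord0 /cofactor.
rewrite !(expand_det_row _ ord0) !big_ord_recl !big_ord0 /cofactor ?det_mx11 ?det_mx00.
rewrite !mxE /= /d3; ring.
Qed.

Lemma det3f (f : nat -> nat -> R) : \det (\matrix_(i<3, j<3) f i j) =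
  d3 (f 0%N 0%N) (f 0%N 1%N) (f 0%N 2%N) (f 1%N 0%N) (f 1%N 1%N) (f 1%N 2%N) (f 2%N 0%N) (f 2%N 1%N) (f 2%N 2%N).
Proof.
rewrite (expand_det_row _ ord0) !big_ord_recl big_ord0 /cofactor.
rewrite !(expand_det_row _ ord0) !big_ord_recl !big_ord0 /cofactor ?det_mx11 ?det_mx00.
rewrite !mxE /= /d3; ring.
Qed.

Definition sh (f : nat -> nat -> R) (j : nat) := fun a b => f a.+1 (bump j b).
Lemma minor4 (f : nat -> nat -> R) (j : 'I_4) :
  row' ord0 (col' j (\matrix_(i<4, k<4) f i k)) = \matrix_(i<3,k<3) sh f j i k.
Proof. by apply/matrixP => i k; rewrite !mxE. Qed.

Lemma det4f (f : nat -> nat -> R) : \det (\matrix_(i<4, j<4) f i j) =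
  f 0%N 0%N * d3 (f 1%N 1%N) (f 1%N 2%N) (f 1%N 3%N) (f 2%N 1%N) (f 2%N 2%N) (f 2%N 3%N) (f 3%N 1%N) (f 3%N 2%N) (f 3%N 3%N)
- f 0%N 1%N * d3 (f 1%N 0%N) (f 1%N 2%N) (f 1%N 3%N) (f 2%N 0%N) (f 2%N 2%N) (f 2%N 3%N) (f 3%N 0%N) (f 3%N 2%N) (f 3%N 3%N)
+ f 0%N 2%N * d3 (f 1%N 0%N) (f 1%N 1%N) (f 1%N 3%N) (f 2%N 0%N) (f 2%N 1%N) (f 2%N 3%N) (f 3%N 0%N) (f 3%N 1%N) (f 3%N 3%N)
- f 0%N 3%N * d3 (f 1%N 0%N) (f 1%N 1%N) (f 1%N 2%N) (f 2%N 0%N) (f 2%N 1%N) (f 2%N 2%N) (f 3%N 0%N) (f 3%N 1%N) (f 3%N 2%N).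
Proof.
rewrite (expand_det_row _ ord0) !big_ord_recl big_ord0 /cofactor !minor4 !det3f /sh /=.
rewrite !mxE /bump /= /d3; ring.
Qed.

Lemma e4E i j k l (u v w x : vec) : e4 i j k l u v w x =
  u 0 (ix i) * d3 (v 0 (ix j)) (v 0 (ix k)) (v 0 (ix l)) (w 0 (ix j)) (w 0 (ix k)) (w 0 (ix l)) (x 0 (ix j)) (x 0 (ix k)) (x 0 (ix l))
- u 0 (ix j) * d3 (v 0 (ix i)) (v 0 (ix k)) (v 0 (ix l)) (w 0 (ix i)) (w 0 (ix k)) (w 0 (ix l)) (x 0 (ix i)) (x 0 (ix k)) (x 0 (ix l))
+ u 0 (ix k) * d3 (v 0 (ix i)) (v 0 (ix j)) (v 0 (ix l)) (w 0 (ix i)) (w 0 (ix j)) (w 0 (ix l)) (x 0 (ix i)) (x 0 (ix j)) (x 0 (ix l))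
- u 0 (ix l) * d3 (v 0 (ix i)) (v 0 (ix j)) (v 0 (ix k)) (w 0 (ix i)) (w 0 (ix j)) (w 0 (ix k)) (x 0 (ix i)) (x 0 (ix j)) (x 0 (ix k)).
Proof. exact: (det4f (fun r c => (nth 0 [:: u; v; w; x] r) 0 (nth (ix 0) [:: ix i; ix j; ix k; ix l] c))). Qed.

Lemma ixeq n m : (0 < n < 8)%N -> (0 < m < 8)%N -> (ix n == ix m) = (n == m).
Proof.
case: n => // n; case: m => // m /= Hn Hm.
by rewrite -(inj_eq val_inj) /= !inordK.
Qed.

Lemma ebE (k j : 'I_7) : ebasis R k 0 j = (k == j)%:R.
Proof. by rewrite /ebasis mxE eqxx /= eq_sym. Qed.

Lemma sum7 (F : 'I_7 -> R) : \sum_k F k =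
  F (ix 1) + F (ix 2) + F (ix 3) + F (ix 4) + F (ix 5) + F (ix 6) + F (ix 7).
Proof.
rewrite !big_ord_recl big_ord0 addr0 !addrA.
by congr (_+_+_+_+_+_+_); congr F; apply: val_inj; rewrite /= inordK.
Qed.

Lemma ord7E (P : 'I_7 -> Prop) : P (ix 1) -> P (ix 2) -> P (ix 3) -> P (ix 4) ->
  P (ix 5) -> P (ix 6) -> P (ix 7) -> forall k, P k.
Proof.
move=> H1 H2 H3 H4 H5 H6 H7 k.
have E : forall n (Hn : (n < 7)%N), Ordinal Hn = ix n.+1.
  by move=> n Hn; apply: val_inj; rewrite /= inordK.
by case: k => [[|[|[|[|[|[|[|n]]]]]]] Hk]; rewrite ?E.
Qed.

Lemma dotpE (u v : vec) : dotp u v = u 0 (ix 1) * v 0 (ix 1) + u 0 (ix 2) * v 0 (ix 2)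
  + u 0 (ix 3) * v 0 (ix 3) + u 0 (ix 4) * v 0 (ix 4) + u 0 (ix 5) * v 0 (ix 5)
  + u 0 (ix 6) * v 0 (ix 6) + u 0 (ix 7) * v 0 (ix 7).
Proof. by rewrite /dotp mxE sum7 !mxE. Qed.

Lemma crossC1 (u v : vec) : (cross u v) 0 (ix 1) = 0 + u 0 (ix 2) * v 0 (ix 3) - u 0 (ix 3) * v 0 (ix 2) + u 0 (ix 4) * v 0 (ix 5) - u 0 (ix 5) * v 0 (ix 4) - u 0 (ix 6) * v 0 (ix 7) + u 0 (ix 7) * v 0 (ix 6).
Proof. by rewrite /cross mxE /phi !e3E /d3 !ebE !ixeq //=; ring. Qed.

Lemma crossC2 (u v : vec) : (cross u v) 0 (ix 2) = 0 - u 0 (ix 1) * v 0 (ix 3) + u 0 (ix 3) * v 0 (ix 1) + u 0 (ix 4) * v 0 (ix 6) + u 0 (ix 5) * v 0 (ix 7) - u 0 (ix 6) * v 0 (ix 4) - u 0 (ix 7) * v 0 (ix 5).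
Proof. by rewrite /cross mxE /phi !e3E /d3 !ebE !ixeq //=; ring. Qed.

Lemma crossC3 (u v : vec) : (cross u v) 0 (ix 3) = 0 + u 0 (ix 1) * v 0 (ix 2) - u 0 (ix 2) * v 0 (ix 1) + u 0 (ix 4) * v 0 (ix 7) - u 0 (ix 5) * v 0 (ix 6) + u 0 (ix 6) * v 0 (ix 5) - u 0 (ix 7) * v 0 (ix 4).
Proof. by rewrite /cross mxE /phi !e3E /d3 !ebE !ixeq //=; ring. Qed.

Lemma crossC4 (u v : vec) : (cross u v) 0 (ix 4) = 0 - u 0 (ix 1) * v 0 (ix 5) - u 0 (ix 2) * v 0 (ix 6) - u 0 (ix 3) * v 0 (ix 7) + u 0 (ix 5) * v 0 (ix 1) + u 0 (ix 6) * v 0 (ix 2) + u 0 (ix 7) * v 0 (ix 3).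
Proof. by rewrite /cross mxE /phi !e3E /d3 !ebE !ixeq //=; ring. Qed.

Lemma crossC5 (u v : vec) : (cross u v) 0 (ix 5) = 0 + u 0 (ix 1) * v 0 (ix 4) - u 0 (ix 2) * v 0 (ix 7) + u 0 (ix 3) * v 0 (ix 6) - u 0 (ix 4) * v 0 (ix 1) - u 0 (ix 6) * v 0 (ix 3) + u 0 (ix 7) * v 0 (ix 2).
Proof. by rewrite /cross mxE /phi !e3E /d3 !ebE !ixeq //=; ring. Qed.

Lemma crossC6 (u v : vec) : (cross u v) 0 (ix 6) = 0 + u 0 (ix 1) * v 0 (ix 7) + u 0 (ix 2) * v 0 (ix 4) - u 0 (ix 3) * v 0 (ix 5) - u 0 (ix 4) * v 0 (ix 2) + u 0 (ix 5) * v 0 (ix 3) - u 0 (ix 7) * v 0 (ix 1).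
Proof. by rewrite /cross mxE /phi !e3E /d3 !ebE !ixeq //=; ring. Qed.

Lemma crossC7 (u v : vec) : (cross u v) 0 (ix 7) = 0 - u 0 (ix 1) * v 0 (ix 6) + u 0 (ix 2) * v 0 (ix 5) + u 0 (ix 3) * v 0 (ix 4) - u 0 (ix 4) * v 0 (ix 3) - u 0 (ix 5) * v 0 (ix 2) + u 0 (ix 6) * v 0 (ix 1).
Proof. by rewrite /cross mxE /phi !e3E /d3 !ebE !ixeq //=; ring. Qed.

Definition crossC := (crossC1, crossC2, crossC3, crossC4, crossC5, crossC6, crossC7).

Lemma addE (A B : vec) k : (A + B) 0 k = A 0 k + B 0 k. Proof. by rewrite mxE. Qed.
Lemma scaleE c (A : vec) k : (c *: A) 0 k = c * A 0 k. Proof. by rewrite mxE. Qed.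
Lemma oppE (A : vec) k : (- A) 0 k = - A 0 k. Proof. by rewrite mxE. Qed.
Lemma zeroE k : (0 : vec) 0 k = 0. Proof. by rewrite mxE. Qed.
Definition vE := (addE, scaleE, oppE, zeroE).

Ltac vtac := apply/rowP; elim/ord7E; rewrite ?vE ?crossC ?vE ?dotpE; ring.

Lemma dot_cross (u v w : vec) : dotp (cross u v) w = phi u v w.
Proof. rewrite dotpE !crossC /phi !e3E /d3. ring. Qed.

Lemma cross_cross (x y : vec) : cross x (cross x y) = dotp x y *: x - dotp x x *: y.
Proof.
vtac.
Qed.

Lemma psi_id (u v x y : vec) : psi u v x y = dotp u x * dotp v y - dotp u y * dotp v x - phi (cross u v) x y.
Proof. rewrite -dot_cross !dotpE !crossC /psi !e4E /d3. ring. Qed.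



Lemma crossDl (u v w : vec) : cross (u + v) w = cross u w + cross v w.
Proof. vtac. Qed.
Lemma crossZl c (u w : vec) : cross (c *: u) w = c *: cross u w.
Proof. vtac. Qed.
Lemma crossDr (u v w : vec) : cross w (u + v) = cross w u + cross w v.
Proof. vtac. Qed.
Lemma crossZr c (u w : vec) : cross w (c *: u) = c *: cross w u.
Proof. vtac. Qed.
Lemma cross_anti (u v : vec) : cross u v = - cross v u.
Proof. vtac. Qed.
Lemma cross0l (w : vec) : cross 0 w = 0.
Proof. by rewrite -(scale0r (0:vec)) crossZl !scale0r. Qed.
Lemma cross0r (w : vec) : cross w 0 = 0.
Proof. by rewrite -(scale0r (0:vec)) crossZr !scale0r. Qed.

Lemma dotpC (u v : vec) : dotp u v = dotp v u.
Proof. rewrite !dotpE; ring. Qed.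
Lemma dotpDl (u v w : vec) : dotp (u + v) w = dotp u w + dotp v w.
Proof. rewrite !dotpE !mxE; ring. Qed.
Lemma dotpZl c (u w : vec) : dotp (c *: u) w = c * dotp u w.
Proof. rewrite !dotpE !mxE; ring. Qed.
Lemma dotpNl (u w : vec) : dotp (- u) w = - dotp u w.
Proof. rewrite !dotpE !mxE; ring. Qed.
Lemma dotp0l (w : vec) : dotp 0 w = 0.
Proof. rewrite !dotpE !mxE; ring. Qed.
Lemma dot_cross_self (v x : vec) : dotp (cross v x) v = 0.
Proof. rewrite dotpE !crossC; ring. Qed.

Lemma phiDl (u v x y : vec) : phi (u + v) x y = phi u x y + phi v x y.
Proof. rewrite /phi !e3E /d3 !mxE; ring. Qed.
Lemma phiZl c (u x y : vec) : phi (c *: u) x y = c * phi u x y.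
Proof. rewrite /phi !e3E /d3 !mxE; ring. Qed.

Lemma contrD (u v : vec) : contr (u + v) = contr u + contr v.
Proof. by apply/matrixP => a b; rewrite !mxE phiDl. Qed.
Lemma contrZ c (u : vec) : contr (c *: u) = c *: contr u.
Proof. by apply/matrixP => a b; rewrite !mxE phiZl. Qed.
Lemma contr0 : contr (0 : vec) = 0.
Proof. by rewrite -(scale0r (0 : vec)) contrZ scale0r. Qed.

Lemma dotp_eb (u : vec) j : dotp u (ebasis R j) = u 0 j.
Proof.
rewrite /dotp mxE (bigD1 j) //= big1 ?addr0 => [|i /negPf Hi]; rewrite !mxE ?eqxx ?Hi /= ?mulr1 ?mulr0 //.
Qed.

Lemma crossr_sum (a : vec) I (r : seq I) (P : pred I) (F : I -> vec) :
  cross a (\sum_(i <- r | P i) F i) = \sum_(i <- r | P i) cross a (F i).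
Proof. exact: (big_morph _ (fun u v => crossDr u v a) (cross0r a)). Qed.

Lemma mul_contr (y a : vec) : y *m contr a = cross a y.
Proof.
apply/rowP => j; rewrite mxE.
rewrite {2}(row_sum_delta y) crossr_sum summxE; apply: eq_bigr => k _.
by rewrite crossZr scaleE mxE -dot_cross dotp_eb.
Qed.

Lemma wedgeE (u v : vec) : wedge u v = u^T *m v - v^T *m u.
Proof.
by apply/matrixP => a b; rewrite !mxE !dotp_eb !big_ord1 !mxE [v _ a * _]mulrC.
Qed.


Lemma mul_wedge (y u v : vec) : y *m wedge u v = dotp y u *: v - dotp y v *: u.
Proof.
by rewrite wedgeE mulmxBr !mulmxA [y *m u^T]mx11_scalar [y *m v^T]mx11_scalar !mul_scalar_mx.
Qed.

Lemma wedge_tr (u v : vec) : (wedge u v)^T = - wedge u v.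
Proof. apply/matrixP => a b; rewrite !mxE; ring. Qed.

Lemma Psi_id (u v : vec) : Psi u v = wedge u v - contr (cross u v).
Proof. apply/matrixP => a b; rewrite !mxE psi_id. done. Qed.

Lemma dotp_eq0 (x : vec) : dotp x x = 0 -> x = 0.
Proof.
rewrite /dotp mxE => H; apply/rowP => k; rewrite [RHS]mxE.
have Hk : x 0 k * x^T k 0 = 0.
  apply: (psumr_eq0P _ H) => // i _; rewrite mxE -expr2 sqr_ge0 //.
by move: Hk; rewrite mxE => /eqP; rewrite mulf_eq0 orbb => /eqP.
Qed.

Lemma dotp_ge0 (x : vec) : 0 <= dotp x x.
Proof. by rewrite /dotp mxE sumr_ge0 // => i _; rewrite mxE -expr2 sqr_ge0. Qed.


Lemma crossl_sum (w : vec) I (r : seq I) (P : pred I) (F : I -> vec) :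
  cross (\sum_(i <- r | P i) F i) w = \sum_(i <- r | P i) cross (F i) w.
Proof. exact: (big_morph _ (fun u v => crossDl u v w) (cross0l w)). Qed.

Lemma contr_sum I (r : seq I) (P : pred I) (F : I -> vec) :
  contr (\sum_(i <- r | P i) F i) = \sum_(i <- r | P i) contr (F i).
Proof. exact: (big_morph _ contrD contr0). Qed.

Lemma contrN (u : vec) : contr (- u) = - contr u.
Proof. by rewrite -scaleN1r contrZ scaleN1r. Qed.

Lemma crossNr (u w : vec) : cross w (- u) = - cross w u.
Proof. by rewrite -scaleN1r crossZr scaleN1r. Qed.

Lemma crossBr (u v w : vec) : cross w (u - v) = cross w u - cross w v.
Proof. by rewrite crossDr crossNr. Qed.

Lemma dotpBl (u v w : vec) : dotp (u - v) w = dotp u w - dotp v w.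
Proof. by rewrite dotpDl dotpNl. Qed.

Definition inP (P : {vspace vec}) (s : seq (R * vec * vec)) :=
  forall t, t \in s -> t.1.2 \in P /\ t.2 \in P.
Definition wsum (s : seq (R * vec * vec)) : 'M[R]_7 :=
  \sum_(t <- s) t.1.1 *: wedge t.1.2 t.2.
Definition csum (s : seq (R * vec * vec)) : vec :=
  \sum_(t <- s) t.1.1 *: cross t.1.2 t.2.

Lemma csum_in P s : assoc_plane P -> inP P s -> csum s \in P.
Proof.
move=> [_ HP] Hs; rewrite /csum big_seq; apply: memv_suml => t Ht.
by have [H1 H2] := Hs t Ht; apply: memvZ; apply: HP.
Qed.
Arguments csum_in {P s}.

Lemma mul_wsum_in P s y : inP P s -> y *m wsum s \in P.
Proof.
move=> Hs; rewrite /wsum mulmx_sumr big_seq; apply: memv_suml => t Ht.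
have [H1 H2] := Hs t Ht; rewrite -scalemxAr mul_wedge.
by apply: memvZ; apply: memvB; apply: memvZ.
Qed.

Lemma e4_dep a b c d (k : 'I_4 -> R) (i0 : 'I_4) (u v w x : vec) :
  \sum_(i < 4) k i *: nth 0 [:: u; v; w; x] i = 0 -> k i0 <> 0 ->
  e4 a b c d u v w x = 0.
Proof.
rewrite /e4 => Hs Hk; apply/eqP/det0P; exists (\row_i k i).
  by apply/eqP => /rowP /(_ i0); rewrite !mxE.
apply/rowP => j; rewrite !mxE.
have := congr1 (fun M : vec => M 0 (nth (ix 0) [:: ix a; ix b; ix c; ix d] j)) Hs.
rewrite summxE mxE => E; rewrite -[RHS]E; apply: eq_bigr => i _; rewrite !mxE //.
Qed.

Lemma psi_dep (P : {vspace vec}) u v x y : \dim P = 3%N ->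
  u \in P -> v \in P -> x \in P -> y \in P -> psi u v x y = 0.
Proof.
move=> dP uP vP xP yP.
pose X := [tuple u; v; x; y].
have nf : ~~ free X.
  rewrite /free size_tuple; apply/negP => /eqP E.
  have : (\dim <<X>> <= \dim P)%N.
    apply: dimvS; apply/span_subvP => z; rewrite !inE.
    by do 3 (case/orP; first by move/eqP->); move/eqP->.
  by rewrite E dP.
have : ~ (forall k : 'I_4 -> R, \sum_(i < 4) k i *: X`_i = 0 -> forall i, k i = 0).
  by move=> H; move/negP: nf; apply; apply/freeP.
move=> H; have [k Hk] := not_all_ex_not _ _ H; have [Hsum Hn] := imply_to_and _ _ Hk.
have [i Hi] := not_all_ex_not _ _ Hn.
have E := fun a b c d => @e4_dep a b c d k i u v x y Hsum Hi.
by rewrite /psi !E !subr0.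
Qed.

Lemma F1 (P : {vspace vec}) u v x : assoc_plane P ->
  u \in P -> v \in P -> x \in P ->
  cross (cross u v) x = dotp x u *: v - dotp x v *: u.
Proof.
move=> [dP HP] uP vP xP.
pose chi := cross (cross u v) x - (dotp x u *: v - dotp x v *: u).
have chiP : chi \in P by apply: memvB; [apply: (HP) => //; apply: (HP) | apply: memvB; apply: memvZ].
have Hd : forall y, dotp chi y = - psi u v x y.
  move=> y; rewrite /chi !dotpBl !dotpZl dot_cross psi_id (dotpC u x) (dotpC v x); ring.
have : dotp chi chi = 0 by rewrite Hd (@psi_dep P u v x chi dP uP vP xP chiP) oppr0.
by move/dotp_eq0/eqP; rewrite subr_eq0 => /eqP.
Qed.

Lemma mul_wsum_P P s x : assoc_plane P -> inP P s -> x \in P ->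
  x *m wsum s = cross (csum s) x.
Proof.
move=> HP Hs xP; rewrite /wsum /csum mulmx_sumr crossl_sum !big_seq.
apply: eq_bigr => t Ht; have [H1 H2] := Hs t Ht.
by rewrite -scalemxAr mul_wedge crossZl (@F1 P _ _ x HP H1 H2 xP).
Qed.
Arguments mul_wsum_P {P s x}.


Definition Cmap (M : 'M[R]_7) : vec := \sum_(a < 7) cross (ebasis R a) (row a M).

Lemma CmapD (A B : 'M[R]_7) : Cmap (A + B) = Cmap A + Cmap B.
Proof.
rewrite /Cmap -big_split /=; apply: eq_bigr => a _ /=. rewrite -crossDr; congr cross.
by apply/rowP => j; rewrite !mxE.
Qed.

Lemma CmapZ c (A : 'M[R]_7) : Cmap (c *: A) = c *: Cmap A.
Proof.
rewrite /Cmap scaler_sumr; apply: eq_bigr => a _; rewrite -crossZr; congr cross.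
by apply/rowP => j; rewrite !mxE.
Qed.

Lemma Cmap0 : Cmap 0 = 0.
Proof. by rewrite -(scale0r (0 : 'M[R]_7)) CmapZ scale0r. Qed.

Lemma Cmap_sum I (r : seq I) (P : pred I) (F : I -> 'M[R]_7) :
  Cmap (\sum_(i <- r | P i) F i) = \sum_(i <- r | P i) Cmap (F i).
Proof. exact: (big_morph _ CmapD Cmap0). Qed.

Lemma row_wedge a (u v : vec) : row a (wedge u v) = u 0 a *: v - v 0 a *: u.
Proof. by rewrite rowE mul_wedge !(dotpC (delta_mx 0 a)) !dotp_eb. Qed.

Lemma row_contr a (p : vec) : row a (contr p) = cross p (ebasis R a).
Proof. by rewrite rowE mul_contr. Qed.

Lemma sum_cross_delta (u v : vec) : \sum_(a < 7) u 0 a *: cross (ebasis R a) v = cross u v.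
Proof.
rewrite {2}(row_sum_delta u) crossl_sum; apply: eq_bigr => a _; by rewrite crossZl.
Qed.

Lemma Cmap_wedge (u v : vec) : Cmap (wedge u v) = 2 *: cross u v.
Proof.
rewrite /Cmap.
under eq_bigr do rewrite row_wedge crossBr !crossZr.
rewrite sumrB !sum_cross_delta (cross_anti v u) opprK.
by rewrite scaler_nat mulr2n.
Qed.

Lemma dotp_ebb (a : 'I_7) : dotp (ebasis R a) (ebasis R a) = 1.
Proof. by rewrite dotp_eb ebE eqxx. Qed.

Lemma Cmap_contr (p : vec) : Cmap (contr p) = 6 *: p.
Proof.
rewrite /Cmap.
under eq_bigr do rewrite row_contr (cross_anti p) crossNr cross_cross dotp_ebb scale1r opprB dotpC dotp_eb.
rewrite sumrB -row_sum_delta sumr_const card_ord.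
by rewrite scaler_nat mulrSr addrK.
Qed.

Lemma Cmap_wsum s : Cmap (wsum s) = 2 *: csum s.
Proof.
rewrite /wsum /csum Cmap_sum scaler_sumr; apply: eq_bigr => t _.
by rewrite CmapZ Cmap_wedge !scalerA mulrC.
Qed.

Lemma ThetaE P om : assoc_plane P -> Theta P om ->
  exists s w, [/\ inP P s, w \in P & om = wsum s + contr w].
Proof.
move=> HP [om1 [om2 [[s1 [H1 E1]] [[s2 [H2 E2]] ->]]]].
exists (s1 ++ s2), (- csum s2); split.
- by move=> t; rewrite mem_cat => /orP [/H1 | /H2].
- by rewrite memvN; apply: csum_in.
have -> : om2 = wsum s2 - contr (csum s2).
  rewrite E2 /wsum /csum contr_sum -sumrB; apply: eq_bigr => t _.
  by rewrite Psi_id contrZ scalerBr.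
by rewrite E1 /wsum big_cat /= contrN addrA.
Qed.
Arguments ThetaE {P om}.


Definition Hm s : 'M[R]_7 := 3 *: wsum s - contr (csum s).

Lemma Hm_mul y s : y *m Hm s = 3 *: (y *m wsum s) - cross (csum s) y.
Proof. by rewrite /Hm mulmxBr -scalemxAr mul_contr. Qed.

Lemma vid1 (X W V Y : vec) : X - (W - (V - Y)) + Y = X - W + V.
Proof. by apply/rowP => k; rewrite !mxE; ring. Qed.

Lemma K1 P s y : assoc_plane P -> inP P s ->
  y *m Hm s *m Hm s + dotp (csum s) (csum s) *: y \in P.
Proof.
move=> HP Hs; have [dP cP] := HP; have aP := csum_in HP Hs.
rewrite !Hm_mul crossBr crossZr cross_cross vid1.
apply: memvD; last by apply: memvZ.
apply: memvB; apply: memvZ; first by apply: mul_wsum_in.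
by apply: cP => //; apply: mul_wsum_in.
Qed.
Arguments K1 {P s} y.

Lemma Hm_P P s x : assoc_plane P -> inP P s -> x \in P ->
  x *m Hm s = 2 *: cross (csum s) x.
Proof.
move=> HP Hs xP; rewrite Hm_mul (mul_wsum_P HP Hs xP).
by move: (cross _ x) => c; apply/rowP => k; rewrite !mxE; ring.
Qed.
Arguments Hm_P {P s x}.

Lemma K2 P s x : assoc_plane P -> inP P s -> x \in P ->
  x *m Hm s *m Hm s = 4 *: (dotp (csum s) x *: csum s - dotp (csum s) (csum s) *: x).
Proof.
move=> HP Hs xP; have [dP cP] := HP; have aP := csum_in HP Hs.
rewrite (Hm_P HP Hs xP) -scalemxAl (Hm_P HP Hs (cP _ _ aP xP)) scalerA cross_cross.
have E4 : (2 * 2 : R) = 4 by ring.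
by rewrite E4.
Qed.
Arguments K2 {P s x}.

Lemma dotp_neq0 (a : vec) : a != 0 -> dotp a a != 0.
Proof. by move=> an; apply/eqP => /dotp_eq0 /eqP; rewrite (negbTE an). Qed.
Arguments dotp_neq0 {a}.

Lemma sub_step (P Q : {vspace vec}) (a b : vec) : a \in P ->
  (forall x, x \in P -> 4 *: (dotp a x *: a - dotp a a *: x) + dotp b b *: x \in Q) ->
  b != 0 -> dotp b b != 4 * dotp a a -> (P <= Q)%VS.
Proof.
move=> aP H bn Hne; have Bn := dotp_neq0 bn.
have aQ : a \in Q.
  have := H a aP.
  have -> : 4 *: (dotp a a *: a - dotp a a *: a) + dotp b b *: a = dotp b b *: a.
    by rewrite subrr scaler0 add0r.
  move=> Ha; have -> : a = (dotp b b)^-1 *: (dotp b b *: a) by rewrite scalerA mulVf // scale1r.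
  by apply: memvZ.
apply/subvP => x xP.
have Hx : (dotp b b - 4 * dotp a a) *: x =
    (4 *: (dotp a x *: a - dotp a a *: x) + dotp b b *: x) - (4 * dotp a x) *: a.
  by move: (dotp a x) (dotp a a) (dotp b b) => c A B; apply/rowP => k; rewrite !mxE; ring.
have Hne' : dotp b b - 4 * dotp a a != 0 by rewrite subr_eq0.
have -> : x = (dotp b b - 4 * dotp a a)^-1 *: ((dotp b b - 4 * dotp a a) *: x).
  by rewrite scalerA mulVf // scale1r.
by apply: memvZ; rewrite Hx; apply: memvB; [apply: H | apply: memvZ].
Qed.
Arguments sub_step {P Q a b}.

Lemma sub_step0 (P Q : {vspace vec}) (a b : vec) :
  (forall x, x \in Q -> 4 *: (dotp b x *: b - dotp b b *: x) + dotp a a *: x \in P) ->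
  b = 0 -> a != 0 -> (Q <= P)%VS.
Proof.
move=> H b0 an; have An := dotp_neq0 an.
apply/subvP => x xQ; have := H x xQ; rewrite b0 !dotp0l.
have -> : 4 *: (0 *: (0 : vec) - 0 *: x) + dotp a a *: x = dotp a a *: x.
  by move: (dotp a a) => A; apply/rowP => k; rewrite !mxE; ring.
move=> Hx; have -> : x = (dotp a a)^-1 *: (dotp a a *: x) by rewrite scalerA mulVf // scale1r.
by apply: memvZ.
Qed.
Arguments sub_step0 {P Q a b}.

Lemma wsum_skew s : (wsum s)^T = - wsum s.
Proof.
apply/matrixP => i j; rewrite !mxE !summxE -sumrN; apply: eq_bigr => t _.
by rewrite !mxE; ring.
Qed.

Lemma wsum_zero P s : assoc_plane P -> inP P s -> csum s = 0 -> wsum s = 0.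
Proof.
move=> HP Hs Hc.
have Hz : forall y : vec, y *m wsum s = 0.
  move=> y; set z := y *m wsum s.
  have zP : z \in P by apply: mul_wsum_in.
  have z0 : z *m wsum s = 0 by rewrite (mul_wsum_P HP Hs zP) Hc cross0l.
  apply: dotp_eq0; rewrite /dotp {2}/z trmx_mul wsum_skew mulNmx mulmxN mulmxA z0.
  by rewrite mul0mx oppr0 mxE.
apply/matrixP => i j; have := congr1 (fun M : vec => M 0 j) (Hz (delta_mx 0 i)).
by rewrite -rowE !mxE.
Qed.
Arguments wsum_zero {P s}.


Lemma ThetaContr (P : {vspace vec}) (v : vec) : assoc_plane P -> v \in P -> Theta P (contr v).
Proof.
move=> HP vP; have [dP cP] := HP.
have [->|vn] := eqVneq v 0.
  rewrite contr0; exists 0, 0; split; [|split]; last by rewrite addr0.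
  - by exists [::]; split => //; rewrite big_nil.
  - by exists [::]; split => //; rewrite big_nil.
have [x xP cx] : exists2 x, x \in P & cross v x != 0.
  case: (classic (exists2 x, x \in P & cross v x != 0)) => // H; exfalso.
  have sub : (P <= <[v]>)%VS.
    apply/subvP => x xP.
    have c0 : cross v x = 0.
      by apply/eqP; apply/negPn/negP => nz; apply: H; exists x.
    have := cross_cross v x; rewrite c0 cross0r => /eqP; rewrite eq_sym subr_eq0 => /eqP E.
    have -> : x = (dotp v v)^-1 *: (dotp v x *: v).
      by rewrite E scalerA mulVf ?dotp_neq0 // scale1r.
    by rewrite scalerA; apply: memvZ; apply: memv_line.
  by have := dimvS sub; rewrite dim_vline vn dP.
have uP : cross v x \in P := cP _ _ vP xP.
have un := dotp_neq0 cx.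
have Hd : dotp (cross v x) v = 0 := dot_cross_self v x.
move: (cross v x) uP un Hd => u uP un Hd.
have wP : cross u v \in P := cP _ _ uP vP.
move: (cross u v) wP (cross_cross u v) => w wP Ew.
have Ev : v = (- (dotp u u)^-1) *: cross u w.
  rewrite Ew Hd scale0r sub0r scalerN scaleNr opprK scalerA mulVf //.
  by rewrite scale1r.
exists ((- (dotp u u)^-1) *: wedge u w), ((dotp u u)^-1 *: Psi u w); split; [|split].
- exists [:: (- (dotp u u)^-1, u, w)]; split; last by rewrite big_seq1.
  by move=> t; rewrite inE => /eqP ->.
- exists [:: ((dotp u u)^-1, u, w)]; split; last by rewrite big_seq1.
  by move=> t; rewrite inE => /eqP ->.
rewrite {1}Ev contrZ Psi_id.
move: (dotp u u)^-1 (wedge u w) (contr (cross u w)) => c W X.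
by apply/matrixP => i j; rewrite !mxE; ring.
Qed.

Lemma main_S (P Q : {vspace vec}) : assoc_plane P -> assoc_plane Q -> P != Q ->
  forall om : 'M[R]_7,
    (Theta P om /\ Theta Q om) <->
    (exists v : vec, v \in P /\ v \in Q /\ om = contr v).
Proof.
move=> HP HQ PQ om; split; last first.
  by case=> v [vP [vQ ->]]; split; apply: ThetaContr.
case=> /(ThetaE HP) [s [w [Hs wP E1]]] /(ThetaE HQ) [s' [z [Hs' zQ E2]]].
have aP := csum_in HP Hs; have bQ := csum_in HQ Hs'.
have EC : 2 *: csum s + 6 *: w = 2 *: csum s' + 6 *: z.
  by have := congr1 Cmap (etrans (esym E1) E2); rewrite !CmapD !Cmap_wsum !Cmap_contr.
have E3 : 3 *: w + csum s = 3 *: z + csum s'.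
  move: EC; move: (csum s) (csum s') => a b EC; apply/rowP => k.
  have := congr1 (fun v : vec => v 0 k) EC; rewrite !mxE => ?; lra.
have HmE : Hm s = Hm s'.
  have h : forall (al : 'M[R]_7) (a w0 : vec),
      3 *: al - contr a = 3 *: (al + contr w0) - contr (3 *: w0 + a).
    move=> al a w0; rewrite contrD contrZ; move: (contr a) (contr w0) => X Y.
    by apply/matrixP => i j; rewrite !mxE; ring.
  by rewrite /Hm (h (wsum s) (csum s) w) (h (wsum s') (csum s') z) -E1 -E2 E3.
have KP : forall x, x \in P -> 4 *: (dotp (csum s) x *: csum s - dotp (csum s) (csum s) *: x)
     + dotp (csum s') (csum s') *: x \in Q.
  by move=> x xP; rewrite -(K2 HP Hs xP) HmE; apply: K1 HQ Hs'.
have KQ : forall x, x \in Q -> 4 *: (dotp (csum s') x *: csum s' - dotp (csum s') (csum s') *: x)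
     + dotp (csum s) (csum s) *: x \in P.
  by move=> x xQ; rewrite -(K2 HQ Hs' xQ) -HmE; apply: K1 HP Hs.
have dPQ : forall P1 Q1 : {vspace vec}, \dim P1 = 3%N -> \dim Q1 = 3%N ->
    (P1 <= Q1)%VS -> P1 == Q1.
  by move=> P1 Q1 d1 d2 sub; rewrite eqEdim sub d1 d2 leqnn.
have [dP _] := HP; have [dQ _] := HQ.
have contraPQ : (P <= Q)%VS -> False.
  by move=> sub; move/negP: PQ; apply; apply: dPQ.
have contraQP : (Q <= P)%VS -> False.
  by move=> sub; move/negP: PQ; rewrite eq_sym; apply; apply: dPQ.
have n3 : (3 : R) != 0 by rewrite pnatr_eq0.
have [a0|an] := eqVneq (csum s) 0; have [b0|bn] := eqVneq (csum s') 0.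
- have wz : w = z.
    move: E3; rewrite a0 b0 !addr0 => /(congr1 (fun v : vec => 3^-1 *: v)).
    by rewrite !scalerA mulVf // !scale1r.
  exists w; split => //; split; first by rewrite wz.
  by rewrite E1 (wsum_zero HP Hs a0) add0r.
- exfalso; apply: contraPQ; apply: (sub_step aP KP bn).
  by rewrite a0 dotp0l mulr0 (dotp_neq0 bn).
- exfalso; apply: contraQP; exact: (sub_step0 KQ b0 an).
- exfalso.
  have An := dotp_neq0 an; have Bn := dotp_neq0 bn.
  case: (boolP (dotp (csum s') (csum s') == 4 * dotp (csum s) (csum s))) => [/eqP BA|BA].
    apply: contraQP; apply: (sub_step bQ KQ an).
    apply/eqP => AB; move/eqP: An; apply; rewrite BA in AB.
    move: AB; move: (dotp (csum s) (csum s)) => A AB; lra.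
  by apply: contraPQ; apply: (sub_step aP KP bn).
Qed.

End S.

Theorem corollary4p13 (R : realType) (P Q : {vspace 'rV[R]_7}) :
  assoc_plane P -> assoc_plane Q -> P != Q ->
  forall om : 'M[R]_7,
    (Theta P om /\ Theta Q om) <->
    (exists v : 'rV[R]_7, v \in P /\ v \in Q /\ om = contr v).
Proof. exact: main_S. Qed.
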